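(* Every outerplanar graph $G$ satisfies $G \in B_2^m$, i.e. $G$ has a $B_2^m$-EPG representation.
   Context: Consider a rectangular grid of horizontal and vertical grid lines; a grid edge is the segment of a grid line between two consecutive grid points. A path on the grid is a sequence of grid points in which consecutive points are joined by grid edges; a bend point is an interior point of the path at which a horizontal grid edge meets a vertical grid edge of the path. Two paths intersect if they share at least one grid edge. An EPG representation of a graph $G$ is a set of paths on a grid, one per vertex, such that two vertices are adjacent in $G$ iff their paths share a grid edge. A $B_k$-EPG representation is an EPG representation in which every path has at most $k$ bends; a path is monotonic if it is ascending in both columns and rows (traversed from one end it only moves rightwards and upwards), and a $B_k^m$-EPG representation is a $B_k$-EPG representation in which every path is monotonic. $B_k$ (resp. $B_k^m$) denotes the class of graphs having a $B_k$-EPG (resp. $B_k^m$-EPG) representation. *)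

(* Defs.v *)
From mathcomp Require Import all_boot.
Set Implicit Arguments. Unset Strict Implicit. Unset Printing Implicit Defensive.

(** Grid points: (column, row) with natural coordinates (any finite family of
    grid paths fits in a rectangular grid, and can be translated to N x N). *)
Definition gpoint := (nat * nat)%type.

Definition grid_adj (p q : gpoint) : bool :=
  ((p.1 == q.1) && ((p.2.+1 == q.2) || (q.2.+1 == p.2))) ||
  ((p.2 == q.2) && ((p.1.+1 == q.1) || (q.1.+1 == p.1))).

Definition path_edges (s : seq gpoint) : seq (gpoint * gpoint) := zip s (behead s).

Definition grid_path (s : seq gpoint) : bool :=
  (1 < size s) && all (fun pq => grid_adj pq.1 pq.2) (path_edges s).

Definition share_edge (s t : seq gpoint) : bool :=
  has (fun pq => has (fun rs => (pq == rs) || (pq == (rs.2, rs.1))) (path_edges t))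
      (path_edges s).

Definition horiz (pq : gpoint * gpoint) : bool := pq.1.2 == pq.2.2.

(** Number of bend points: interior points where a horizontal and a vertical
    edge of the path meet (one per pair of consecutive edges of different
    orientation). *)
Definition bends (s : seq gpoint) : nat :=
  let E := path_edges s in
  count (fun ab => horiz ab.1 != horiz ab.2) (zip E (behead E)).

Definition ascending (s : seq gpoint) : bool :=
  sorted leq (map fst s) && sorted leq (map snd s).

Definition monotonic (s : seq gpoint) : bool := ascending s || ascending (rev s).

Definition EPG_rep (T : finType) (e : rel T) (P : T -> seq gpoint) : Prop :=
  (forall v, grid_path (P v)) /\
  (forall u v, u != v -> (e u v <-> share_edge (P u) (P v))).

Definition in_Bkm (k : nat) (T : finType) (e : rel T) : Prop :=
  exists P : T -> seq gpoint,
    EPG_rep e P /\ (forall v, bends (P v) <= k) /\ (forall v, monotonic (P v)).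

(** Outerplanar: the graph has a drawing with all vertices on a circle and
    edges as pairwise non-crossing chords inside it; i.e. there is a (linear,
    cut-open cyclic) injective placement of the vertices such that no two edges
    have strictly interleaving endpoints. *)
Definition outerplanar (T : finType) (e : rel T) : Prop :=
  exists pos : T -> nat, injective pos /\
    forall a b c d, e a b -> e c d ->
      ~ [/\ pos a < pos c, pos c < pos b & pos b < pos d].

(* Main.v *)
Require Import Defs.
From mathcomp Require Import all_boot.
From mathcomp Require Import zify.
Set Implicit Arguments. Unset Strict Implicit. Unset Printing Implicit Defensive.

Definition sf (a b i : nat) : nat * nat :=
  if i <= a then (i, 0) else if i <= a + b then (a, i - a) else (i - b, b).

Definition spt (h : bool) (x y a b i : nat) : gpoint :=
  let d := sf a b i in if h then (x + d.1, y + d.2) else (x + d.2, y + d.1).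

Definition stair h x y a b c : seq gpoint := mkseq (spt h x y a b) (a + b + c).+1.

Definition hE (X Y : nat) : gpoint * gpoint := ((X, Y), (X.+1, Y)).
Definition vE (X Y : nat) : gpoint * gpoint := ((X, Y), (X, Y.+1)).

Lemma sf1 a b i : i < a -> sf a b i = (i, 0) /\ sf a b i.+1 = (i.+1, 0).
Proof. rewrite /sf => H; split; rewrite ifT //; lia. Qed.

Lemma sf2 a b i : a <= i < a + b -> sf a b i = (a, i - a) /\ sf a b i.+1 = (a, i.+1 - a).
Proof.
move=> /andP[H1 H2]; rewrite /sf; split.
  case: ifP => H3; first by (have -> : i = a by lia); rewrite subnn.
  by rewrite ifT //; lia.
by rewrite ifF ?ifT //; lia.
Qed.

Lemma sf3 a b i : a + b <= i -> sf a b i = (i - b, b) /\ sf a b i.+1 = (i.+1 - b, b).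
Proof.
move=> H; rewrite /sf; split; last by rewrite !ifF //; lia.
case: ifP => H3; first by (have [-> ->] : b = 0 /\ i = a by lia); rewrite subn0.
case: ifP => H4; last by [].
have -> : i = a + b by lia.
by rewrite addKn addnK.
Qed.

Lemma zip_mkseq (U : Type) (f : nat -> U) n :
  zip (mkseq f n.+1) (behead (mkseq f n.+1)) = mkseq (fun i => (f i, f i.+1)) n.
Proof.
apply: (@eq_from_nth _ (f 0, f 0)).
  by rewrite size_zip size_behead !size_mkseq; lia.
move=> i; rewrite size_zip size_behead !size_mkseq => Hi.
rewrite nth_zip_cond size_zip size_behead !size_mkseq ifT /=; last lia.
rewrite (nth_map 0) ?size_iota //; last lia.
rewrite nth_iota //; last lia.
rewrite !nth_mkseq //; lia.
Qed.

Lemma path_edges_mkseq (f : nat -> gpoint) n :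
  path_edges (mkseq f n.+1) = mkseq (fun i => (f i, f i.+1)) n.
Proof. exact: zip_mkseq. Qed.

Lemma mem_mkseqP (T' : eqType) (g : nat -> T') n z :
  reflect (exists2 i, i < n & z = g i) (z \in mkseq g n).
Proof.
rewrite /mkseq; apply: (iffP mapP) => [[i]|[i]].
  by rewrite mem_iota => Hi ->; exists i.
by move=> Hi ->; exists i; rewrite // mem_iota.
Qed.

Lemma stair_edges h x y a b c :
  path_edges (stair h x y a b c) = mkseq (fun i => (spt h x y a b i, spt h x y a b i.+1)) (a + b + c).
Proof. exact: path_edges_mkseq. Qed.

Lemma stairT_edge x y a b c pq : pq \in path_edges (stair true x y a b c) ->
  (exists2 j, j < a & pq = hE (x + j) y) \/
  (exists2 j, j < b & pq = vE (x + a) (y + j)) \/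
  (exists2 j, j < c & pq = hE (x + a + j) (y + b)).
Proof.
rewrite stair_edges => /mem_mkseqP [i Hi ->]; rewrite /spt.
case: (ltnP i a) => H1.
  have [-> ->] := sf1 b H1; left; exists i => //; rewrite /hE /=.
  by rewrite !addn0 addnS.
case: (ltnP i (a + b)) => H2.
  have H12 : (a <= i < a + b) by rewrite H1 H2.
  have [-> ->] := sf2 H12; right; left; exists (i - a); first lia.
  rewrite /vE /=; f_equal; f_equal; lia.
have [-> ->] := sf3 H2; right; right; exists (i - a - b); first lia.
rewrite /hE /=; f_equal; f_equal; lia.
Qed.

Lemma stairF_edge x y a b c pq : pq \in path_edges (stair false x y a b c) ->
  (exists2 j, j < a & pq = vE x (y + j)) \/
  (exists2 j, j < b & pq = hE (x + j) (y + a)) \/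
  (exists2 j, j < c & pq = vE (x + b) (y + a + j)).
Proof.
rewrite stair_edges => /mem_mkseqP [i Hi ->]; rewrite /spt.
case: (ltnP i a) => H1.
  have [-> ->] := sf1 b H1; left; exists i => //; rewrite /vE /=.
  by rewrite !addn0 addnS.
case: (ltnP i (a + b)) => H2.
  have H12 : (a <= i < a + b) by rewrite H1 H2.
  have [-> ->] := sf2 H12; right; left; exists (i - a); first lia.
  rewrite /hE /=; f_equal; f_equal; lia.
have [-> ->] := sf3 H2; right; right; exists (i - a - b); first lia.
rewrite /vE /=; f_equal; f_equal; lia.
Qed.

Lemma stair_mem h x y a b c i : i < a + b + c ->
  (spt h x y a b i, spt h x y a b i.+1) \in path_edges (stair h x y a b c).
Proof. by move=> Hi; rewrite stair_edges; apply/mem_mkseqP; exists i. Qed.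

Lemma stairT1 x y a b c j : j < a -> hE (x + j) y \in path_edges (stair true x y a b c).
Proof.
move=> Hj; have E : (spt true x y a b (j), spt true x y a b (j).+1) = hE (x + j) y.
  rewrite /spt; have [-> ->] := @sf1 a b j Hj; rewrite /hE /vE /=; f_equal; f_equal; lia.
rewrite -E; apply: stair_mem; lia.
Qed.
Lemma stairT2 x y a b c j : j < b -> vE (x + a) (y + j) \in path_edges (stair true x y a b c).
Proof.
move=> Hj; have E : (spt true x y a b (a + j), spt true x y a b (a + j).+1) = vE (x + a) (y + j).
  rewrite /spt; have [-> ->] := @sf2 a b (a + j) ltac:(lia); rewrite /hE /vE /=; f_equal; f_equal; lia.
rewrite -E; apply: stair_mem; lia.
Qed.
Lemma stairT3 x y a b c j : j < c -> hE (x + a + j) (y + b) \in path_edges (stair true x y a b c).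
Proof.
move=> Hj; have E : (spt true x y a b (a + b + j), spt true x y a b (a + b + j).+1) = hE (x + a + j) (y + b).
  rewrite /spt; have [-> ->] := @sf3 a b (a + b + j) ltac:(lia); rewrite /hE /vE /=; f_equal; f_equal; lia.
rewrite -E; apply: stair_mem; lia.
Qed.
Lemma stairF1 x y a b c j : j < a -> vE x (y + j) \in path_edges (stair false x y a b c).
Proof.
move=> Hj; have E : (spt false x y a b (j), spt false x y a b (j).+1) = vE x (y + j).
  rewrite /spt; have [-> ->] := @sf1 a b j Hj; rewrite /hE /vE /=; f_equal; f_equal; lia.
rewrite -E; apply: stair_mem; lia.
Qed.
Lemma stairF2 x y a b c j : j < b -> hE (x + j) (y + a) \in path_edges (stair false x y a b c).
Proof.
move=> Hj; have E : (spt false x y a b (a + j), spt false x y a b (a + j).+1) = hE (x + j) (y + a).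
  rewrite /spt; have [-> ->] := @sf2 a b (a + j) ltac:(lia); rewrite /hE /vE /=; f_equal; f_equal; lia.
rewrite -E; apply: stair_mem; lia.
Qed.
Lemma stairF3 x y a b c j : j < c -> vE (x + b) (y + a + j) \in path_edges (stair false x y a b c).
Proof.
move=> Hj; have E : (spt false x y a b (a + b + j), spt false x y a b (a + b + j).+1) = vE (x + b) (y + a + j).
  rewrite /spt; have [-> ->] := @sf3 a b (a + b + j) ltac:(lia); rewrite /hE /vE /=; f_equal; f_equal; lia.
rewrite -E; apply: stair_mem; lia.
Qed.

Lemma sf_step a b i : sf a b i.+1 =
  if a <= i < a + b then ((sf a b i).1, (sf a b i).2.+1) else ((sf a b i).1.+1, (sf a b i).2).
Proof.
case: (ltnP i a) => H1.
  by have [E1 E2] := sf1 b H1; rewrite E2 E1.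
case: (ltnP i (a + b)) => H2.
  have H12 : (a <= i < a + b) by rewrite H1 H2.
  have [E1 E2] := sf2 H12; rewrite E2 E1 /=; f_equal; lia.
have [E1 E2] := sf3 H2; rewrite E2 E1 /=; f_equal; lia.
Qed.

Lemma sf_val a b i : sf a b i = (minn i a + (i - (a + b)), minn (i - a) b).
Proof.
rewrite /sf; case: ifP => H1; first (f_equal; lia).
case: ifP => H2; f_equal; lia.
Qed.

Lemma sf_mono a b i j : i <= j -> (sf a b i).1 <= (sf a b j).1 /\ (sf a b i).2 <= (sf a b j).2.
Proof. rewrite !sf_val /= => H; lia. Qed.

Lemma stair_adj h x y a b i : grid_adj (spt h x y a b i) (spt h x y a b i.+1).
Proof.
rewrite /spt sf_step; case: (a <= i < a + b); case: h; rewrite /grid_adj /=; lia.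
Qed.

Lemma stair_horiz h x y a b i :
  horiz (spt h x y a b i, spt h x y a b i.+1) = (h != (a <= i < a + b)).
Proof.
rewrite /horiz /spt sf_step; case: (a <= i < a + b); case: h => /=; lia.
Qed.

Lemma stair_grid h x y a b c : 0 < a + b + c -> grid_path (stair h x y a b c).
Proof.
move=> H; rewrite /grid_path size_mkseq ltnS H /=.
rewrite stair_edges; apply/allP => pq /mem_mkseqP [i _ ->] /=.
exact: stair_adj.
Qed.

Lemma count_iota_succ k m : count (fun i => i.+1 == k) (iota 0 m) <= 1.
Proof.
apply: (leq_trans (sub_count (a2 := pred1 k.-1) _ _)).
  by move=> i /eqP <- /=.
by rewrite count_uniq_mem ?iota_uniq // leq_b1.
Qed.

Lemma stair_bends h x y a b c : bends (stair h x y a b c) <= 2.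
Proof.
rewrite /bends; set E := path_edges _.
rewrite /E stair_edges.
case Hn: (a + b + c) => [|m]; first by [].
rewrite zip_mkseq /mkseq count_map.
set P := preim _ _.
apply: (leq_trans (sub_count (a2 := predU (fun i => i.+1 == a) (fun i => i.+1 == a + b)) _ _)).
  move=> i; rewrite /P /= !stair_horiz => Hi; apply/orP.
  move: Hi; case: (h) => /=; lia.
apply: (leq_trans (leq_addr (count (predI (fun i => i.+1 == a) (fun i => i.+1 == a + b)) (iota 0 m)) _)).
rewrite count_predUI.
by rewrite -(addn1 1) leq_add ?count_iota_succ.
Qed.

Lemma stair_asc h x y a b c : ascending (stair h x y a b c).
Proof.
rewrite /ascending /stair /mkseq -!map_comp; apply/andP; split;
  (apply: homo_sorted; last exact: iota_sorted) => i j Hij /=;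
  have [H1 H2] := sf_mono a b Hij; rewrite /spt; case: h => /=; lia.
Qed.

Lemma stairT1' x y a b c X Y : Y = y -> x <= X < x + a -> hE X Y \in path_edges (stair true x y a b c).
Proof. move=> -> H; have -> : X = x + (X - x) by lia. apply: stairT1; lia. Qed.
Lemma stairT2' x y a b c X Y : X = x + a -> y <= Y < y + b -> vE X Y \in path_edges (stair true x y a b c).
Proof. move=> -> H; have -> : Y = y + (Y - y) by lia. apply: stairT2; lia. Qed.
Lemma stairT3' x y a b c X Y : Y = y + b -> x + a <= X < x + a + c -> hE X Y \in path_edges (stair true x y a b c).
Proof. move=> -> H; have -> : X = x + a + (X - x - a) by lia. apply: stairT3; lia. Qed.
Lemma stairF1' x y a b c X Y : X = x -> y <= Y < y + a -> vE X Y \in path_edges (stair false x y a b c).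
Proof. move=> -> H; have -> : Y = y + (Y - y) by lia. apply: stairF1; lia. Qed.
Lemma stairF2' x y a b c X Y : Y = y + a -> x <= X < x + b -> hE X Y \in path_edges (stair false x y a b c).
Proof. move=> -> H; have -> : X = x + (X - x) by lia. apply: stairF2; lia. Qed.
Lemma stairF3' x y a b c X Y : X = x + b -> y + a <= Y < y + a + c -> vE X Y \in path_edges (stair false x y a b c).
Proof. move=> -> H; have -> : Y = y + a + (Y - y - a) by lia. apply: stairF3; lia. Qed.
Section Main.
Variables (T : finType) (e : rel T) (pos : T -> nat).
Hypothesis esym : symmetric e.
Hypothesis eirr : irreflexive e.
Hypothesis posinj : injective pos.
Hypothesis nocross : forall a b c d, e a b -> e c d ->
  ~ [/\ pos a < pos c, pos c < pos b & pos b < pos d].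

Definition lnb (x : T) : option T :=
  [pick y | e x y && (pos y < pos x) &&
            [forall z, (e x z && (pos z < pos x)) ==> (pos y <= pos z)]].
Definition rnb (x : T) : option T :=
  [pick y | e x y && (pos x < pos y) &&
            [forall z, (e x z && (pos x < pos z)) ==> (pos z <= pos y)]].

Lemma lnbP x p : lnb x = Some p ->
  [/\ e x p, pos p < pos x & forall z, e x z -> pos z < pos x -> pos p <= pos z].
Proof.
rewrite /lnb; case: pickP => // y /andP[/andP[H1 H2] /forallP H3] [<-].
split => // z Hz Hz'; move: (H3 z); rewrite Hz Hz' /=; exact.
Qed.

Lemma rnbP x v : rnb x = Some v ->
  [/\ e x v, pos x < pos v & forall z, e x z -> pos x < pos z -> pos z <= pos v].
Proof.
rewrite /rnb; case: pickP => // y /andP[/andP[H1 H2] /forallP H3] [<-].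
split => // z Hz Hz'; move: (H3 z); rewrite Hz Hz' /=; exact.
Qed.

Lemma neq_pos x z : e x z -> pos x != pos z.
Proof.
move=> Hxz; apply/eqP => /posinj Exz; move: Hxz; rewrite Exz.
by rewrite eirr.
Qed.

Lemma lnb_none x z : lnb x = None -> e x z -> pos x < pos z.
Proof.
rewrite /lnb; case: pickP => // Hn _ Hz.
have := neq_pos Hz; case: ltngtP => // Hlt _.
have Pz : (fun w => e x w && (pos w < pos x)) z by rewrite /= Hz Hlt.
case: (@arg_minnP _ z (fun w => e x w && (pos w < pos x)) pos Pz) => y /andP[Py1 Py2] Hmin.
have := Hn y; rewrite Py1 Py2 /=.
suff -> : [forall z0, e x z0 && (pos z0 < pos x) ==> (pos y <= pos z0)] by [].
apply/forallP => w; apply/implyP => Hw; exact: Hmin.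
Qed.

Lemma rnb_none x z : rnb x = None -> e x z -> pos z < pos x.
Proof.
rewrite /rnb; case: pickP => // Hn _ Hz.
have := neq_pos Hz; case: ltngtP => // Hlt _.
have Pz : (fun w => e x w && (pos x < pos w)) z by rewrite /= Hz Hlt.
case: (@arg_maxnP _ z (fun w => e x w && (pos x < pos w)) pos Pz) => y /andP[Py1 Py2] Hmax.
have := Hn y; rewrite Py1 Py2 /=.
suff -> : [forall z0, e x z0 && (pos x < pos z0) ==> (pos z0 <= pos y)] by [].
apply/forallP => w; apply/implyP => Hw; exact: Hmax.
Qed.

Lemma lnb_ex x z : e x z -> pos z < pos x -> exists p, lnb x = Some p.
Proof.
move=> Hz Hlt; case Hl: (lnb x) => [p|]; first by exists p.
by have := lnb_none Hl Hz; lia.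
Qed.

Lemma rnb_ex x z : e x z -> pos x < pos z -> exists v, rnb x = Some v.
Proof.
move=> Hz Hlt; case Hr: (rnb x) => [v|]; first by exists v.
by have := rnb_none Hr Hz; lia.
Qed.

Definition S (x : T) := 4 * pos x + 4.
Definition Nb := (\max_(x : T) pos x).+1.
Definition TOP := 4 * Nb + 4.
Definition MM := 4 * Nb + 8.

Lemma posN x : pos x < Nb.
Proof. by rewrite ltnS; apply: leq_bigmax. Qed.

Lemma S_inj x y : S x = S y -> x = y.
Proof. rewrite /S => H; apply: posinj; lia. Qed.

Fixpoint dep (k : nat) (x : T) {struct k} : nat :=
  match k with
  | 0 => 0
  | k'.+1 => if lnb x is Some p then (dep k' p).+1 else 0
  end.

Lemma dep_stable k k' x : pos x < k -> pos x < k' -> dep k x = dep k' x.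
Proof.
elim: k k' x => [|k IH] [|k'] x //= H1 H2.
case Hl: (lnb x) => [p|] //.
have [_ Hp _] := lnbP Hl.
by rewrite (IH k'); lia.
Qed.

Definition col x := odd (dep Nb x).

Lemma col_l x p : lnb x = Some p -> col p = ~~ col x.
Proof.
move=> Hl; rewrite /col.
have := posN x; have [_ Hp _] := lnbP Hl.
case HN: Nb => [|k] H1; first lia.
rewrite /= Hl /= negbK (@dep_stable k k.+1) //; lia.
Qed.


Definition type2 x : bool :=
  if lnb x is Some p then (if rnb x is Some v then lnb v == Some p else false) else false.
Definition type3 x : bool :=
  if rnb x is Some v then
    (lnb v != Some x) && (if lnb x is Some p then lnb v != Some p else true)
  else false.
Definition same x : bool := if rnb x is Some v then col v == col x else false.
Definition Lv x := if lnb x is Some p then S p else 0.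
Definition Rv x := if rnb x is Some v then S v else 0.
Definition ownlo x := if lnb x is Some p then S p else S x.
Definition ownhi x := if type3 x && ~~ same x then Rv x else TOP.
Definition ahi x := if type3 x && same x then Rv x else if type2 x then (Rv x).+1 else (S x).+1.
Definition bl x := if (lnb x != None) && same x then Lv x else S x.

Definition segs x (i : bool * nat * nat) : Prop :=
  let: (o, lam, k) := i in
  [/\ o = col x, lam = S x & ownlo x <= k < ownhi x]
  \/ (exists p, [/\ lnb x = Some p, o = col p, lam = S p & S x <= k < ahi x])
  \/ (exists v, [/\ rnb x = Some v, type3 x, o = col v, lam = S v & bl x - 1 <= k < bl x])
  \/ [/\ lnb x = None, type3 x, same x, o = ~~ col x & (lam = S x /\ S x <= k < Rv x)].

Definition vpar x : bool * nat * nat * nat * nat * nat :=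
  if lnb x is Some p then
    if type3 x then
      if same x then (false, MM - Rv x, Lv x - 1, 1, Rv x - S x, TOP - Lv x)
      else (true, MM - S x - 1, Lv x, 1, Rv x - Lv x, 1)
    else
      let ext := if type2 x then (Rv x).+1 else (S x).+1 in
      (true, MM - ext, Lv x, ext - S x, TOP - Lv x, 0)
  else
    if type3 x then
      if same x then (false, MM - Rv x, S x - 1, 1, Rv x - S x, TOP - S x)
      else (false, MM - S x, S x, Rv x - S x, 1, 0)
    else (false, MM - S x, S x, TOP - S x, 0, 0).

Definition sp (par : bool * nat * nat * nat * nat * nat) :=
  let: (h, x0, y0, a, b, c) := par in stair h x0 y0 a b c.

Definition rp (par : bool * nat * nat * nat * nat * nat) :=
  let: (h, x0, y0, a, b, c) := par in
  if h then stair false (MM - y0 - b) (MM - x0 - a - c) c b a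
  else stair true (MM - y0 - a - c) (MM - x0 - b) c b a.

Definition P x := if col x then rp (vpar x) else sp (vpar x).

Definition key (pq : gpoint * gpoint) : bool * nat * nat :=
  if pq.1.1 == pq.2.1 then (false, MM - pq.1.1, pq.1.2) else (true, pq.1.2, MM - pq.2.1).
Definition act (i : bool * nat * nat) :=
  let: (o, lam, k) := i in if o then hE (MM - k.+1) lam else vE (MM - lam) k.
Definition refl (pq : gpoint * gpoint) : gpoint * gpoint :=
  ((MM - pq.2.2, MM - pq.2.1), (MM - pq.1.2, MM - pq.1.1)).

Lemma key_hE X Y : key (hE X Y) = (true, Y, MM - X.+1).
Proof. by rewrite /key /hE /= ifF //; lia. Qed.
Lemma key_vE X Y : key (vE X Y) = (false, MM - X, Y).
Proof. by rewrite /key /vE /= eqxx. Qed.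

Definition pbound (par : bool * nat * nat * nat * nat * nat) :=
  let: (h, x0, y0, a, b, c) := par in
  (if h then x0 + a + c else x0 + b) < MM /\ (if h then y0 + b else y0 + a + c) < MM.

Lemma refl_G1 par pq : pbound par -> pq \in path_edges (sp par) ->
  refl pq \in path_edges (rp par).
Proof.
case: par => [[[[[h x0] y0] a] b] c] /= [B1 B2].
case: h B1 B2 => B1 B2.
  case/stairT_edge => [[j Hj ->]|[[j Hj ->]|[j Hj ->]]].
  - have -> : refl (hE (x0 + j) y0) =
       vE ((MM - y0 - b) + b) ((MM - x0 - a - c) + c + (a - j - 1)).
      by rewrite /refl /hE /vE /=; f_equal; f_equal; lia.
    apply: stairF3; lia.
  - have -> : refl (vE (x0 + a) (y0 + j)) =
       hE ((MM - y0 - b) + (b - j - 1)) ((MM - x0 - a - c) + c).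
      by rewrite /refl /hE /vE /=; f_equal; f_equal; lia.
    apply: stairF2; lia.
  - have -> : refl (hE (x0 + a + j) (y0 + b)) =
       vE (MM - y0 - b) ((MM - x0 - a - c) + (c - j - 1)).
      by rewrite /refl /hE /vE /=; f_equal; f_equal; lia.
    apply: stairF1; lia.
case/stairF_edge => [[j Hj ->]|[[j Hj ->]|[j Hj ->]]].
- have -> : refl (vE x0 (y0 + j)) =
     hE ((MM - y0 - a - c) + c + (a - j - 1)) ((MM - x0 - b) + b).
    by rewrite /refl /hE /vE /=; f_equal; f_equal; lia.
  apply: stairT3; lia.
- have -> : refl (hE (x0 + j) (y0 + a)) =
     vE ((MM - y0 - a - c) + c) ((MM - x0 - b) + (b - j - 1)).
    by rewrite /refl /hE /vE /=; f_equal; f_equal; lia.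
  apply: stairT2; lia.
- have -> : refl (vE (x0 + b) (y0 + a + j)) =
     hE ((MM - y0 - a - c) + (c - j - 1)) (MM - x0 - b).
    by rewrite /refl /hE /vE /=; f_equal; f_equal; lia.
  apply: stairT1; lia.
Qed.

Lemma refl_G2 par pq : pbound par -> pq \in path_edges (rp par) ->
  exists2 pq', pq' \in path_edges (sp par) & pq = refl pq'.
Proof.
case: par => [[[[[h x0] y0] a] b] c] /= [B1 B2].
case: h B1 B2 => B1 B2.
  case/stairF_edge => [[j Hj ->]|[[j Hj ->]|[j Hj ->]]].
  - exists (hE (x0 + a + (c - j - 1)) (y0 + b)); first by apply: stairT3; lia.
    by rewrite /refl /hE /vE /=; f_equal; f_equal; lia.
  - exists (vE (x0 + a) (y0 + (b - j - 1))); first by apply: stairT2; lia.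
    by rewrite /refl /hE /vE /=; f_equal; f_equal; lia.
  - exists (hE (x0 + (a - j - 1)) y0); first by apply: stairT1; lia.
    by rewrite /refl /hE /vE /=; f_equal; f_equal; lia.
case/stairT_edge => [[j Hj ->]|[[j Hj ->]|[j Hj ->]]].
- exists (vE (x0 + b) (y0 + a + (c - j - 1))); first by apply: stairF3; lia.
  by rewrite /refl /hE /vE /=; f_equal; f_equal; lia.
- exists (hE (x0 + (b - j - 1)) (y0 + a)); first by apply: stairF2; lia.
  by rewrite /refl /hE /vE /=; f_equal; f_equal; lia.
- exists (vE x0 (y0 + (a - j - 1))); first by apply: stairF1; lia.
  by rewrite /refl /hE /vE /=; f_equal; f_equal; lia.
Qed.


Lemma type3_rnb x : type3 x -> exists v, rnb x = Some v.
Proof. by rewrite /type3; case: (rnb x) => [v|] // _; exists v. Qed.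

Lemma type3_not2 x : type3 x -> type2 x = false.
Proof.
rewrite /type3 /type2; case: (rnb x) => [v|] //; case: (lnb x) => [p|] //.
by case/andP => _ /negbTE ->.
Qed.

Lemma same_col x v : rnb x = Some v -> same x = (col v == col x).
Proof. by rewrite /same => ->. Qed.

Lemma col_same x v : rnb x = Some v -> same x -> col v = col x.
Proof. by move=> Hr; rewrite (same_col Hr) => /eqP. Qed.

Lemma col_nsame x v : rnb x = Some v -> same x = false -> col v = ~~ col x.
Proof. by move=> Hr; rewrite (same_col Hr); case: (col v); case: (col x). Qed.

Ltac unf := rewrite /ownlo /ownhi /ahi /bl /Lv /Rv; unfold S, TOP, MM in *.

Lemma E1V x pq : pq \in path_edges (sp (vpar x)) ->
  segs x (col x (+) (key pq).1.1, (key pq).1.2, (key pq).2).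
Proof.
have Nx := posN x.
rewrite /vpar; case Hl: (lnb x) => [p|].
  have [Hxp Hpx _] := lnbP Hl; have Np := posN p; have Cp := col_l Hl.
  case Ht3: (type3 x).
    have [v Hr] := type3_rnb Ht3; have [Hxv Hxv' _] := rnbP Hr; have Nv := posN v.
    have Ht2 := type3_not2 Ht3.
    case Hs: (same x).
      have Cv := col_same Hr Hs.
      rewrite /= /Lv /Rv Hl Hr.
      case/stairF_edge => [[j Hj ->]|[[j Hj ->]|[j Hj ->]]]; rewrite ?key_hE ?key_vE /=.
      - right; right; left; exists v; split => //; rewrite ?addbT ?addbF ?Cp ?Cv //; unf; rewrite ?Hl ?Hr ?Ht3 ?Hs ?Ht2 /=; lia.
      - right; left; exists p; split => //; rewrite ?addbT ?addbF ?Cp ?Cv //; unf; rewrite ?Hl ?Hr ?Ht3 ?Hs ?Ht2 /=; lia.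
      - left; split => //; rewrite ?addbT ?addbF ?Cp ?Cv //; unf; rewrite ?Hl ?Hr ?Ht3 ?Hs ?Ht2 /=; lia.
    have Cv := col_nsame Hr Hs.
    rewrite /= /Lv /Rv Hl Hr.
    case/stairT_edge => [[j Hj ->]|[[j Hj ->]|[j Hj ->]]]; rewrite ?key_hE ?key_vE /=.
    - right; left; exists p; split => //; rewrite ?addbT ?addbF ?Cp ?Cv //; unf; rewrite ?Hl ?Hr ?Ht3 ?Hs ?Ht2 /=; lia.
    - left; split => //; rewrite ?addbT ?addbF ?Cp ?Cv //; unf; rewrite ?Hl ?Hr ?Ht3 ?Hs ?Ht2 /=; lia.
    - right; right; left; exists v; split => //; rewrite ?addbT ?addbF ?Cp ?Cv //; unf; rewrite ?Hl ?Hr ?Ht3 ?Hs ?Ht2 /=; lia.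
  case Ht2: (type2 x).
    have [v [Hr Hlv]] : exists v, rnb x = Some v /\ lnb v = Some p.
      move: Ht2; rewrite /type2 Hl; case: (rnb x) => [v|] // /eqP H; by exists v.
    have [Hxv Hxv' _] := rnbP Hr; have Nv := posN v.
    rewrite /= /Lv /Rv Hl Hr.
    case/stairT_edge => [[j Hj ->]|[[j Hj ->]|[j Hj ->]]]; rewrite ?key_hE ?key_vE /=.
    - right; left; exists p; split => //; rewrite ?addbT ?addbF ?Cp //; unf; rewrite ?Hl ?Hr ?Ht3 ?Ht2 /=; lia.
    - left; split => //; rewrite ?addbT ?addbF ?Cp //; unf; rewrite ?Hl ?Hr ?Ht3 ?Ht2 /=; lia.
    - lia.
  rewrite /= /Lv Hl.
  case/stairT_edge => [[j Hj ->]|[[j Hj ->]|[j Hj ->]]]; rewrite ?key_hE ?key_vE /=.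
  - right; left; exists p; split => //; rewrite ?addbT ?addbF ?Cp //; unf; rewrite ?Hl ?Ht3 ?Ht2 /=; lia.
  - left; split => //; rewrite ?addbT ?addbF ?Cp //; unf; rewrite ?Hl ?Ht3 ?Ht2 /=; lia.
  - lia.
case Ht3: (type3 x).
  have [v Hr] := type3_rnb Ht3; have [Hxv Hxv' _] := rnbP Hr; have Nv := posN v.
  case Hs: (same x).
    have Cv := col_same Hr Hs.
    rewrite /= /Rv Hr.
    case/stairF_edge => [[j Hj ->]|[[j Hj ->]|[j Hj ->]]]; rewrite ?key_hE ?key_vE /=.
    - right; right; left; exists v; split => //; rewrite ?addbT ?addbF ?Cv //; unf; rewrite ?Hl ?Hr ?Ht3 ?Hs /=; lia.
    - right; right; right; split => //; rewrite ?addbT //; split; unf; rewrite ?Hr; lia.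
    - left; split => //; rewrite ?addbT ?addbF ?Cv //; unf; rewrite ?Hl ?Hr ?Ht3 ?Hs /=; lia.
  have Cv := col_nsame Hr Hs.
  rewrite /= /Rv Hr.
  case/stairF_edge => [[j Hj ->]|[[j Hj ->]|[j Hj ->]]]; rewrite ?key_hE ?key_vE /=.
  - left; split => //; rewrite ?addbT ?addbF ?Cv //; unf; rewrite ?Hl ?Hr ?Ht3 ?Hs /=; lia.
  - right; right; left; exists v; split => //; rewrite ?addbT ?addbF ?Cv //; unf; rewrite ?Hl ?Hr ?Ht3 ?Hs /=; lia.
  - lia.
rewrite /=.
case/stairF_edge => [[j Hj ->]|[[j Hj ->]|[j Hj ->]]]; rewrite ?key_hE ?key_vE /=.
- left; split => //; rewrite ?addbT ?addbF  //; unf; rewrite ?Hl ?Ht3 /=; lia.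
- lia.
- lia.
Qed.


Lemma oF c o : c (+) o = c -> o = false.
Proof. by case: c; case: o. Qed.
Lemma oT c o : c (+) o = ~~ c -> o = true.
Proof. by case: c; case: o. Qed.

Ltac memtac := rewrite /act /=;
  first [ apply: stairT1'; unf; lia | apply: stairT2'; unf; lia | apply: stairT3'; unf; lia
        | apply: stairF1'; unf; lia | apply: stairF2'; unf; lia | apply: stairF3'; unf; lia ].

Lemma E2V x o lam k : segs x (col x (+) o, lam, k) -> act (o, lam, k) \in path_edges (sp (vpar x)).
Proof.
have Nx := posN x.
move=> [[Ho Hlam Hk]|[[p' [Hl' Ho Hlam Hk]]|[[v' [Hr' Ht Ho Hlam Hk]]|[Hl' Ht Hs' Ho [Hlam Hk]]]]].
- have -> := oF Ho; subst lam.
  move: Hk; rewrite /vpar /ownlo /ownhi; case Hl: (lnb x) => [p|].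
    have [Hxp Hpx _] := lnbP Hl; have Np := posN p.
    case Ht3: (type3 x).
      have [v Hr] := type3_rnb Ht3; have [Hxv Hxv' _] := rnbP Hr; have Nv := posN v.
      case Hs: (same x); rewrite /= /Lv /Rv Hl Hr => Hk; memtac.
    case Ht2: (type2 x).
      have [v Hr] : exists v, rnb x = Some v.
        move: Ht2; rewrite /type2 Hl; case: (rnb x) => [v|] // _; by exists v.
      have [Hxv Hxv' _] := rnbP Hr; have Nv := posN v.
      rewrite /= /Lv /Rv Hl Hr => Hk; memtac.
    rewrite /= /Lv Hl => Hk; memtac.
  case Ht3: (type3 x).
    have [v Hr] := type3_rnb Ht3; have [Hxv Hxv' _] := rnbP Hr; have Nv := posN v.
    case Hs: (same x); rewrite /= /Rv Hr => Hk; memtac.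
  rewrite /= => Hk; memtac.
- subst lam; have Np := posN p'; have [Hxp Hpx _] := lnbP Hl'.
  have := oT (etrans Ho (col_l Hl')) => ->.
  move: Hk; rewrite /vpar /ahi Hl'.
  case Ht3: (type3 x).
    have [v Hr] := type3_rnb Ht3; have [Hxv Hxv' _] := rnbP Hr; have Nv := posN v.
    have Ht2 := type3_not2 Ht3.
    case Hs: (same x); rewrite /= /Lv /Rv ?Ht2 Hl' Hr => Hk; memtac.
  case Ht2: (type2 x).
    have [v Hr] : exists v, rnb x = Some v.
      move: Ht2; rewrite /type2 Hl'; case: (rnb x) => [v|] // _; by exists v.
    have [Hxv Hxv' _] := rnbP Hr; have Nv := posN v.
    rewrite /= /Lv /Rv Hl' Hr => Hk; memtac.
  rewrite /= /Lv Hl' => Hk; memtac.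
- subst lam; have [Hxv Hxv' _] := rnbP Hr'; have Nv := posN v'.
  move: Hk; rewrite /vpar /bl Ht.
  case Hs: (same x).
    have := oF (etrans Ho (col_same Hr' Hs)) => ->.
    case Hl: (lnb x) => [p|]; rewrite /= /Lv /Rv ?Hl Hr' => Hk.
      have [Hxp Hpx _] := lnbP Hl; have Np := posN p; memtac.
    memtac.
  have := oT (etrans Ho (col_nsame Hr' Hs)) => ->.
  case Hl: (lnb x) => [p|]; rewrite /= /Lv /Rv ?Hl Hr' ?andbF => Hk.
    have [Hxp Hpx _] := lnbP Hl; have Np := posN p; memtac.
  memtac.
- subst lam; have := oT Ho => ->.
  have [v Hr] := type3_rnb Ht; have [Hxv Hxv' _] := rnbP Hr; have Nv := posN v.
  move: Hk; rewrite /vpar Hl' Ht Hs' /= /Rv Hr => Hk; memtac.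
Qed.


Lemma eS x y : e x y -> e y x.
Proof. by rewrite esym. Qed.

Lemma ahi_gt y : S y < ahi y.
Proof.
rewrite /ahi; case Ht3: (type3 y) => /=.
  have [v Hr] := type3_rnb Ht3; have [_ H _] := rnbP Hr.
  case: (same y) => /=; last rewrite type3_not2 //; rewrite /Rv Hr /S; lia.
case Ht2: (type2 y); last lia.
move: Ht2; rewrite /type2 /Rv; case: (lnb y) => // p.
case Hr: (rnb y) => [v|] // _; have [_ H _] := rnbP Hr; rewrite /S; lia.
Qed.

Lemma ownhi_gt y : S y < ownhi y.
Proof.
have := posN y; rewrite /ownhi; case Ht3: (type3 y) => /=; last by rewrite /TOP /S; lia.
have [v Hr] := type3_rnb Ht3; have [_ H _] := rnbP Hr.
case: (same y) => /=; rewrite /Rv ?Hr /TOP /S; lia.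
Qed.

Lemma bl_le y : 4 <= bl y <= S y.
Proof.
rewrite /bl /Lv; case Hl: (lnb y) => [p|] /=; last by rewrite /S; lia.
have [_ H _] := lnbP Hl; case: (same y); rewrite /S; lia.
Qed.

Lemma trich a p b : lnb a = Some p -> rnb a = Some b ->
  exists q, lnb b = Some q /\ (q = a \/ q = p \/ pos q < pos p).
Proof.
move=> Hl Hr; have [Hap Hpa _] := lnbP Hl; have [Hab Hab' _] := rnbP Hr.
have [q Hq] := lnb_ex (eS Hab) Hab'.
have [Hbq Hqb Hqmin] := lnbP Hq; have Hqa := Hqmin a (eS Hab) Hab'.
exists q; split => //.
case: (eqVneq q a) => [->|Nqa]; first by left.
case: (eqVneq q p) => [->|Nqp]; first by right; left.
right; right; case: (ltngtP (pos q) (pos p)) => // [Hpq|/posinj E]; last by rewrite E eqxx in Nqp.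
exfalso; apply: (nocross (eS Hap) (eS Hbq)); split => //.
have : pos q != pos a by apply/negP => /eqP /posinj E; rewrite E eqxx in Nqa.
lia.
Qed.

Lemma trich0 a b : lnb a = None -> rnb a = Some b ->
  exists q, lnb b = Some q /\ (q = a \/ pos q < pos a).
Proof.
move=> Hl Hr; have [Hab Hab' _] := rnbP Hr.
have [q Hq] := lnb_ex (eS Hab) Hab'.
have [Hbq Hqb Hqmin] := lnbP Hq; have Hqa := Hqmin a (eS Hab) Hab'.
exists q; split => //.
case: (eqVneq q a) => [->|Nqa]; first by left.
right; have : pos q != pos a by apply/negP => /eqP /posinj E; rewrite E eqxx in Nqa.
lia.
Qed.

Lemma adj_ord a b : pos a < pos b -> e a b -> exists i, segs a i /\ segs b i.
Proof.
move=> Hab Eab.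
have [q Hq] := lnb_ex (eS Eab) Hab.
have [Hbq Hqb Hqmin] := lnbP Hq; have Hqa := Hqmin a (eS Eab) Hab.
have [v Hv] := rnb_ex Eab Hab.
have [Hav Hav' Hvmax] := rnbP Hv; have Hbv := Hvmax b Eab Hab.
have Nb' := posN b; have Na := posN a; have Nv := posN v.
case: (eqVneq q a) => [Eqa|Nqa].
  subst q; exists (col a, S a, S b); split.
    left; split => //; apply/andP; split.
      rewrite /ownlo; case Hl: (lnb a) => [p|]; last by rewrite /S; lia.
      by have [_ H _] := lnbP Hl; rewrite /S; lia.
    rewrite /ownhi; case Ht3: (type3 a) => /=; last by rewrite /TOP /S; lia.
    case: (same a) => /=; first by rewrite /TOP /S; lia.
    rewrite /Rv Hv.
    have Nbv : b != v.
      apply/eqP => Ebv; move: Ht3; rewrite /type3 Hv -Ebv Hq eqxx //.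
    have : pos b != pos v by apply/negP => /eqP /posinj E; rewrite E eqxx in Nbv.
    rewrite /S; lia.
  right; left; exists a; split => //; apply/andP; split => //; exact: ahi_gt.
have Hqa' : pos q < pos a.
  have : pos q != pos a by apply/negP => /eqP /posinj E; rewrite E eqxx in Nqa.
  lia.
have Ebv : b = v.
  apply/eqP; apply/negP => Nbv.
  have : pos b != pos v by apply/negP => /eqP /posinj E; rewrite E eqxx in Nbv.
  move=> Hne; apply: (nocross (eS Hbq) Hav); split => //; lia.
subst v.
have Hbeta : type3 a -> segs a (col b, S b, bl a - 1) /\
    (bl a <= S q -> False) -> exists i, segs a i /\ segs b i.
  move=> _ [H1 H2]; exists (col b, S b, bl a - 1); split => //.
  left; split => //; apply/andP; split.
    rewrite /ownlo Hq; have := bl_le a; case: (leqP (bl a) (S q)) => Hc Hbl; [by exfalso; apply: H2 | lia].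
  have := ownhi_gt b; have := bl_le a; rewrite /S; lia.
case Hla: (lnb a) => [p|].
  have [Hap Hpa _] := lnbP Hla.
  have [q' [Hq' Hc]] := trich Hla Hv.
  rewrite Hq in Hq'; case: Hq' => Eq; subst q'.
  case: Hc => [E|[Eqp|Hqp]]; first by rewrite E eqxx in Nqa.
    subst q.
    have Ht3 : type3 a = false by rewrite /type3 Hv Hla Hq eqxx andbF.
    have Ht2 : type2 a by rewrite /type2 Hla Hv Hq.
    exists (col p, S p, S b); split.
      right; left; exists p; split => //; apply/andP; split; first by rewrite /S; lia.
      by rewrite /ahi Ht3 Ht2 /Rv Hv.
    right; left; exists p; split => //; apply/andP; split => //; exact: ahi_gt.
  have Ht3 : type3 a.
    rewrite /type3 Hv Hla Hq; apply/andP; split; apply/negP => /eqP [E].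
      by rewrite E eqxx in Nqa.
    by subst q; lia.
  apply: Hbeta => //; split.
    right; right; left; exists b; split => //; have := bl_le a; lia.
  rewrite /bl /Lv Hla /=; case: (same a) => /=; rewrite /S; lia.
have Hc := trich0 Hla Hv; case: Hc => [q' [Hq' Hc]].
rewrite Hq in Hq'; case: Hq' => Eq; subst q'.
have Ht3 : type3 a.
  rewrite /type3 Hv Hla Hq andbT; apply/negP => /eqP [E]; by rewrite E eqxx in Nqa.
apply: Hbeta => //; split.
  right; right; left; exists b; split => //; have := bl_le a; lia.
rewrite /bl Hla /=; rewrite /S; lia.
Qed.


Lemma neq_lt x y : x != y -> pos x < pos y \/ pos y < pos x.
Proof.
move=> N; have : pos x != pos y by apply/negP => /eqP /posinj E; rewrite E eqxx in N.
lia.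
Qed.

Lemma aa_ord u w p : lnb u = Some p -> lnb w = Some p -> pos u < pos w ->
  S w < ahi u -> e u w.
Proof.
move=> Hu Hw Huw; have [Hup Hpu _] := lnbP Hu; have [Hwp Hpw _] := lnbP Hw.
have key : forall v, rnb u = Some v -> pos w <= pos v -> e u w.
  move=> v Hr Hwv; have [Huv Huv' _] := rnbP Hr.
  case: (eqVneq w v) => [->//|Nwv].
  exfalso; apply: (nocross (eS Hwp) Huv); split => //.
  have : pos w != pos v by apply/negP => /eqP /posinj E; rewrite E eqxx in Nwv.
  lia.
rewrite /ahi; case Ht3: (type3 u) => /=.
  have [v Hr] := type3_rnb Ht3; rewrite type3_not2 //.
  case: (same u) => /=; last by rewrite /S; lia.
  rewrite /Rv Hr /S => H; apply: (key v Hr); lia.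
case Ht2: (type2 u); last by rewrite /S; lia.
move: Ht2; rewrite /type2 /Rv Hu; case Hr: (rnb u) => [v|] // _.
rewrite /S => H; apply: (key v Hr); lia.
Qed.

Lemma bl_cases y : bl y = S y \/ exists p, lnb y = Some p /\ bl y = S p.
Proof.
rewrite /bl /Lv; case Hl: (lnb y) => [p|] /=; last by left.
case: (same y) => /=; [right; by exists p | by left].
Qed.

Lemma segs_adj u w i : u != w -> segs u i -> segs w i -> e u w.
Proof.
case: i => [[o lam] k] Nuw.
have Hsym : e w u -> e u w by apply: eS.
have Nwu : w != u by rewrite eq_sym.
move=> [[Ho Hlam Hk]|[[p [Hl Ho Hlam Hk]]|[[v [Hr Ht Ho Hlam Hk]]|[Hl Ht Hs Ho [Hlam Hk]]]]];
move=> [[Ho' Hlam' Hk']|[[p' [Hl' Ho' Hlam' Hk']]|[[v' [Hr' Ht' Ho' Hlam' Hk']]|[Hl' Ht' Hs' Ho' [Hlam' Hk']]]]].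
- by have := S_inj (etrans (Logic.eq_sym Hlam) Hlam'); move/eqP: Nuw.
- have E := S_inj (etrans (Logic.eq_sym Hlam) Hlam'); subst p'.
  by have [H _ _] := lnbP Hl'; apply: Hsym.
- have E := S_inj (etrans (Logic.eq_sym Hlam) Hlam'); subst v'.
  by have [H _ _] := rnbP Hr'; apply: Hsym.
- by have := S_inj (etrans (Logic.eq_sym Hlam) Hlam'); move/eqP: Nuw.
- have E := S_inj (etrans (Logic.eq_sym Hlam) Hlam'); subst p.
  by have [H _ _] := lnbP Hl.
- have E := S_inj (etrans (Logic.eq_sym Hlam) Hlam'); subst p'.
  case: (neq_lt Nuw) => Hlt.
    by apply: (aa_ord Hl Hl' Hlt); lia.
  by apply: Hsym; apply: (aa_ord Hl' Hl Hlt); lia.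
- have E := S_inj (etrans (Logic.eq_sym Hlam) Hlam'); subst p.
  have [_ H1 _] := lnbP Hl; have [_ H2 _] := rnbP Hr'; have := bl_le w.
  rewrite /S in Hk Hlam Hlam' *; lia.
- have E := S_inj (etrans (Logic.eq_sym Hlam) Hlam'); subst p.
  by move: Ho'; rewrite Ho; case: (col w).
- have E := S_inj (etrans (Logic.eq_sym Hlam) Hlam'); subst v.
  by have [H _ _] := rnbP Hr.
- have E := S_inj (etrans (Logic.eq_sym Hlam) Hlam'); subst p'.
  have [_ H1 _] := lnbP Hl'; have [_ H2 _] := rnbP Hr; have := bl_le u.
  rewrite /S in Hk' Hlam Hlam' *; lia.
- have E := S_inj (etrans (Logic.eq_sym Hlam) Hlam'); subst v'.
  have [Huv Huv' _] := rnbP Hr; have [Hwv Hwv' _] := rnbP Hr'.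
  have Hbl : bl u = bl w by have := bl_le u; have := bl_le w; lia.
  case: (bl_cases u) => [Bu|[p [Hp Bu]]]; case: (bl_cases w) => [Bw|[q [Hq Bw]]].
  + by have := S_inj (etrans (Logic.eq_sym Bu) (etrans Hbl Bw)); move/eqP: Nuw.
  + have E := S_inj (etrans (Logic.eq_sym Bu) (etrans Hbl Bw)); subst q.
    by have [H _ _] := lnbP Hq; apply: Hsym.
  + have E := S_inj (etrans (Logic.eq_sym Bw) (etrans (Logic.eq_sym Hbl) Bu)); subst p.
    by have [H _ _] := lnbP Hp.
  + have E := S_inj (etrans (Logic.eq_sym Bu) (etrans Hbl Bw)); subst q.
    have [Hup Hpu _] := lnbP Hp; have [Hwp Hpw _] := lnbP Hq.
    exfalso; case: (neq_lt Nuw) => Hlt.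
      by apply: (nocross (eS Hwp) Huv); split.
    by apply: (nocross (eS Hup) Hwv); split.
- have E := S_inj (etrans (Logic.eq_sym Hlam) Hlam'); subst v.
  by move: Ho'; rewrite Ho; case: (col w).
- by have := S_inj (etrans (Logic.eq_sym Hlam) Hlam'); move/eqP: Nuw.
- have E := S_inj (etrans (Logic.eq_sym Hlam) Hlam'); subst p'.
  by move: Ho; rewrite Ho'; case: (col u).
- have E := S_inj (etrans (Logic.eq_sym Hlam) Hlam'); subst v'.
  by move: Ho; rewrite Ho'; case: (col u).
- by have := S_inj (etrans (Logic.eq_sym Hlam) Hlam'); move/eqP: Nuw.
Qed.


Lemma refl_G2k par pq : pbound par -> pq \in path_edges (rp par) ->
  exists2 pq', pq' \in path_edges (sp par) &
    key pq = (~~ (key pq').1.1, (key pq').1.2, (key pq').2).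
Proof.
case: par => [[[[[h x0] y0] a] b] c] /= [B1 B2].
case: h B1 B2 => B1 B2.
  case/stairF_edge => [[j Hj ->]|[[j Hj ->]|[j Hj ->]]].
  - exists (hE (x0 + a + (c - j - 1)) (y0 + b)); first by apply: stairT3; lia.
    by rewrite key_hE key_vE /=; congr (_, _, _); lia.
  - exists (vE (x0 + a) (y0 + (b - j - 1))); first by apply: stairT2; lia.
    by rewrite key_hE key_vE /=; congr (_, _, _); lia.
  - exists (hE (x0 + (a - j - 1)) y0); first by apply: stairT1; lia.
    by rewrite key_hE key_vE /=; congr (_, _, _); lia.
case/stairT_edge => [[j Hj ->]|[[j Hj ->]|[j Hj ->]]].
- exists (vE (x0 + b) (y0 + a + (c - j - 1))); first by apply: stairF3; lia.
  by rewrite key_hE key_vE /=; congr (_, _, _); lia.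
- exists (hE (x0 + (b - j - 1)) (y0 + a)); first by apply: stairF2; lia.
  by rewrite key_hE key_vE /=; congr (_, _, _); lia.
- exists (vE x0 (y0 + (a - j - 1))); first by apply: stairF1; lia.
  by rewrite key_hE key_vE /=; congr (_, _, _); lia.
Qed.

Lemma refl_act o lam k : lam <= MM -> k < MM -> refl (act (~~ o, lam, k)) = act (o, lam, k).
Proof. by move=> H1 H2; case: o; rewrite /refl /act /hE /vE /=; f_equal; f_equal; lia. Qed.

Lemma segs_bound x o lam k : segs x (o, lam, k) -> lam <= MM /\ k < MM.
Proof.
have N1 := posN x.
have HS : forall y, S y <= 4 * Nb by move=> y; have := posN y; rewrite /S; lia.
have HR : Rv x <= 4 * Nb by rewrite /Rv; case: (rnb x) => // v; apply: HS.
have HL : Lv x <= 4 * Nb by rewrite /Lv; case: (lnb x) => // v; apply: HS.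
have Hoh : ownhi x <= TOP by rewrite /ownhi; case: (_ && _) => //; rewrite /TOP; lia.
have Hah : ahi x <= 4 * Nb + 1.
  rewrite /ahi; case: (_ && _); first lia.
  case: (type2 x); first lia. have := HS x; lia.
have Hbl := bl_le x; have HSx := HS x.
move=> [[Ho Hlam Hk]|[[p [Hl Ho Hlam Hk]]|[[v [Hr Ht Ho Hlam Hk]]|[Hl Ht Hs Ho [Hlam Hk]]]]];
  subst lam; rewrite /MM; rewrite /TOP in Hoh; try (have := HS p); try (have := HS v); lia.
Qed.

Lemma vpar_bound x : pbound (vpar x).
Proof.
have N1 := posN x.
rewrite /vpar; case Hl: (lnb x) => [p|].
  have [_ Hpx _] := lnbP Hl; have Np := posN p.
  case Ht3: (type3 x).
    have [v Hr] := type3_rnb Ht3; have [_ Hxv _] := rnbP Hr; have Nv := posN v.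
    case: (same x); rewrite /= /Lv /Rv Hl Hr /S /TOP /MM; lia.
  case Ht2: (type2 x).
    have [v Hr] : exists v, rnb x = Some v.
      move: Ht2; rewrite /type2 Hl; case: (rnb x) => [v|] // _; by exists v.
    have [_ Hxv _] := rnbP Hr; have Nv := posN v.
    rewrite /= /Lv /Rv Hl Hr /S /TOP /MM; lia.
  rewrite /= /Lv Hl /S /TOP /MM; lia.
case Ht3: (type3 x).
  have [v Hr] := type3_rnb Ht3; have [_ Hxv _] := rnbP Hr; have Nv := posN v.
  case: (same x); rewrite /= /Rv Hr /S /TOP /MM; lia.
rewrite /= /S /TOP /MM; lia.
Qed.

Lemma E1 x pq : pq \in path_edges (P x) -> segs x (key pq).
Proof.
rewrite /P; case Hc: (col x).
  case/(refl_G2k (vpar_bound x)) => pq' H ->.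
  have := E1V H; rewrite Hc.
  by case: (key pq') => [[o lam] k] /=; rewrite ?addTb.
move=> H; have := E1V H; rewrite Hc.
by case: (key pq) => [[o lam] k] /=; rewrite ?addFb.
Qed.

Lemma E2 x i : segs x i -> act i \in path_edges (P x).
Proof.
case: i => [[o lam] k] H; have [B1 B2] := segs_bound H.
rewrite /P; case Hc: (col x).
  rewrite -refl_act //; apply: refl_G1; first exact: vpar_bound.
  by apply: E2V; rewrite Hc ?addTb negbK.
by apply: E2V; rewrite Hc ?addFb.
Qed.

Lemma vpar_pos x : let: (h, x0, y0, a, b, c) := vpar x in 0 < a + b + c.
Proof.
have N1 := posN x.
rewrite /vpar; case Hl: (lnb x) => [p|].
  have [_ Hpx _] := lnbP Hl; have Np := posN p.
  case Ht3: (type3 x).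
    have [v Hr] := type3_rnb Ht3; have [_ Hxv _] := rnbP Hr; have Nv := posN v.
    case: (same x); rewrite /= /Lv /Rv Hl Hr /S /TOP /MM; lia.
  case: (type2 x); rewrite /= /Lv /Rv Hl /S /TOP /MM; lia.
case: (type3 x); first case: (same x); rewrite /= /S /TOP /MM; lia.
Qed.

Lemma P_form x : exists h x0 y0 a b c, P x = stair h x0 y0 a b c /\ 0 < a + b + c.
Proof.
have := vpar_pos x; rewrite /P.
case: (vpar x) => [[[[[h x0] y0] a] b] c] H.
case: (col x); last by exists h, x0, y0, a, b, c.
case: h; rewrite /rp.
  by exists false, (MM - y0 - b), (MM - x0 - a - c), c, b, a; split => //; lia.
by exists true, (MM - y0 - a - c), (MM - x0 - b), c, b, a; split => //; lia.
Qed.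

Lemma edge_form x pq : pq \in path_edges (P x) -> exists X Y, pq = hE X Y \/ pq = vE X Y.
Proof.
have [h [x0 [y0 [a [b [c [-> _]]]]]]] := P_form x.
case: h.
  case/stairT_edge => [[j _ ->]|[[j _ ->]|[j _ ->]]]; do 2 eexists; by [left|right].
case/stairF_edge => [[j _ ->]|[[j _ ->]|[j _ ->]]]; do 2 eexists; by [left|right].
Qed.

Lemma adj_segs u w : u != w -> e u w -> exists i, segs u i /\ segs w i.
Proof.
move=> N H; case: (neq_lt N) => Hlt; first exact: adj_ord.
have [i [H1 H2]] := adj_ord Hlt (eS H); by exists i.
Qed.

End Main.

Theorem theorem2p7 (T : finType) (e : rel T) :
  symmetric e -> irreflexive e -> outerplanar e -> in_Bkm 2 e.
Proof.
move=> Hs Hi [pos [Hinj Hnc]].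
exists (P e pos); split; [split|split].
- move=> v; have [h [x0 [y0 [a [b [c [-> H]]]]]]] := P_form e pos v.
  exact: stair_grid.
- move=> u w N; split.
    move=> H; have [i [H1 H2]] := adj_segs Hs Hi Hinj Hnc N H.
    apply/hasP; exists (act pos i); first exact: E2.
    apply/hasP; exists (act pos i); first exact: E2.
    by rewrite eqxx.
  case/hasP => pq H1 /hasP [rs H2 /orP [/eqP E|/eqP E]].
    subst rs; exact: (segs_adj Hs Hinj Hnc N (E1 H1) (E1 H2)).
  exfalso.
  have [X [Y F1]] := edge_form H1; have [X' [Y' F2]] := edge_form H2.
  move: E; case: F1 => ->; case: F2 => -> /=; rewrite /hE /vE /=; case=> *; lia.
- move=> v; have [h [x0 [y0 [a [b [c [-> H]]]]]]] := P_form e pos v.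
  exact: stair_bends.
- move=> v; have [h [x0 [y0 [a [b [c [-> H]]]]]]] := P_form e pos v.
  by rewrite /monotonic stair_asc.
Qed.
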